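(* Let $X$ be a set and let $X_d$ denote $X$ with the discrete topology. Then every flow $\varphi:\mathbb{R}\times 2^{X_d}_L\rightarrow 2^{X_d}_L$ is trivial, i.e. $\varphi(t,C)=C$ for all $t\in\mathbb{R}$ and all $C\in 2^{X_d}_L$.
   Context: For a set $X$ with the discrete topology, $2^X$ denotes the set of all non-empty (closed, hence all non-empty) subsets of $X$. For $U\subseteq X$ put $L_U=\{F\subseteq X \mid F\neq\emptyset,\ F\cap U\neq\emptyset\}$. The lower semifinite topology on $2^X$ is the topology having the sets $L_U$, $U$ open in $X_d$ (i.e. any subset of $X$), as a subbase; the resulting space is denoted $2^{X_d}_L$. A flow on a topological space $Y$ is a continuous map $\varphi:\mathbb{R}\times Y\to Y$ (with $\mathbb{R}$ carrying its usual topology and $\mathbb{R}\times Y$ the product topology) such that $\varphi(0,y)=y$ and $\varphi(s+t,y)=\varphi(s,\varphi(t,y))$ for all $s,t\in\mathbb{R}$, $y\in Y$. *)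

(* Defs.v *)
From HB Require Import structures.
From mathcomp Require Import all_boot all_order all_algebra.
From mathcomp Require Import all_classical all_reals all_analysis.
Set Implicit Arguments. Unset Strict Implicit. Unset Printing Implicit Defensive.
Import Order.TTheory GRing.Theory Num.Theory.
Import numFieldNormedType.Exports.
Local Open Scope classical_set_scope.

(* The hyperspace 2^X of all non-empty subsets of X (all subsets of X_d are closed). *)
Definition hyperspace (X : Type) : Type := {C : set X | C !=set0}.

HB.instance Definition _ (X : Type) := gen_eqMixin (hyperspace X).
HB.instance Definition _ (X : Type) := gen_choiceMixin (hyperspace X).

(* L_U = { F in 2^X | F meets U }, for U open in X_d, i.e. any U : set X. *)
Definition lower_subbase (X : Type) (U : set X) : set (hyperspace X) :=
  [set F | (projT1 F `&` U) !=set0].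

Definition lower_hyperspace (X : Type) : Type := hyperspace X.
HB.instance Definition _ (X : Type) := Choice.on (lower_hyperspace X).
HB.instance Definition _ (X : Type) :=
  isSubBaseTopological.Build (lower_hyperspace X)
    (@setT (set X)) (fun U : set X => @lower_subbase X U).

Definition is_flow (R : realType) (Y : topologicalType) (phi : R -> Y -> Y) : Prop :=
  [/\ continuous (fun p : R^o * Y => phi p.1 p.2),
      (forall y, phi 0%R y = y) &
      (forall s t y, phi (s + t)%R y = phi s (phi t y))].

(* Main.v *)
Require Import Defs.
From HB Require Import structures.
From mathcomp Require Import all_boot all_order all_algebra.
From mathcomp Require Import all_classical all_reals all_analysis.
From mathcomp Require Import finmap.
Import GRing.Theory Num.Theory.
Import numFieldNormedType.Exports.
Local Open Scope classical_set_scope.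

Lemma open_up (X : Type) (O : set (lower_hyperspace X)) (C D : lower_hyperspace X) :
  open O -> O C -> sval C `<=` sval D -> O D.
Proof.
move=> Oop; case: Oop => D' sub <- [A DA AC] CD; simpl in *.
exists A => //; have [F _ FA] := sub A DA.
rewrite -FA => U FU; have := AC; rewrite -FA => /(_ U FU).
by case=> x [Cx Ux]; exists x; split => //; apply: CD.
Qed.

Lemma open_sub (X : Type) (U : set X) : open (lower_subbase U : set (lower_hyperspace X)).
Proof.
rewrite /open /=; exists [set lower_subbase U].
  move=> A ->; exists [fset U]%fset; first by move=> ?; rewrite in_setT.
  by simpl; rewrite set_fset1 bigcap_set1.
by simpl; rewrite bigcup_set1.
Qed.

Lemma mono (X : Type) (f : lower_hyperspace X -> lower_hyperspace X) :
  continuous f -> forall C D : lower_hyperspace X, sval C `<=` sval D -> sval (f C) `<=` sval (f D).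
Proof.
move=> fc C D CD x fCx.
have : nbhs (f C) (lower_subbase [set x]).
  apply: open_nbhs_nbhs; split; first exact: open_sub.
  by exists x.
move=> /(fc C); rewrite nbhsE => -[B [Bop BC] sB].
have := sB D (@open_up _ _ _ _ Bop BC CD).
by case=> y [fDy /= yx]; rewrite -yx.
Qed.

Lemma slice_y (R : realType) (Y : topologicalType) (phi : R -> Y -> Y) :
  is_flow phi -> forall t : R, continuous (phi t).
Proof.
case=> pc _ _ t y.
have -> : phi t = (fun p : R^o * Y => phi p.1 p.2) \o (fun z => (t, z)) by [].
apply: (continuous_comp _ (pc (t, y))).
exact: (cvg_pair (cvg_cst t) cvg_id).
Qed.

Lemma slice_t (R : realType) (Y : topologicalType) (phi : R -> Y -> Y) :
  is_flow phi -> forall y : Y, continuous (fun t : R => phi t y).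
Proof.
case=> pc _ _ y t.
have -> : (fun t : R => phi t y) = (fun p : R^o * Y => phi p.1 p.2) \o (fun s : R => (s, y)) by [].
apply: (continuous_comp _ (pc (t, y))).
exact: (cvg_pair cvg_id (cvg_cst y)).
Qed.

Lemma inv_l (R : realType) (Y : topologicalType) (phi : R -> Y -> Y) :
  is_flow phi -> forall (t : R) y, phi (- t)%R (phi t y) = y.
Proof. by case=> _ h0 hc t y; rewrite -hc addNr h0. Qed.

Lemma inv_r (R : realType) (Y : topologicalType) (phi : R -> Y -> Y) :
  is_flow phi -> forall (t : R) y, phi t (phi (- t)%R y) = y.
Proof. by case=> _ h0 hc t y; rewrite -hc addrN h0. Qed.
Arguments slice_y {R Y phi}.
Arguments slice_t {R Y phi}.
Arguments inv_l {R Y phi}.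
Arguments inv_r {R Y phi}.

Theorem mainTheorem1 (R : realType) (X : Type)
  (phi : R -> lower_hyperspace X -> lower_hyperspace X) :
  is_flow phi -> forall (t : R) (C : lower_hyperspace X), phi t C = C.
Proof.
move=> hf.
have mon t (C D : lower_hyperspace X) : sval C `<=` sval D -> sval (phi t C) `<=` sval (phi t D).
  exact: (@mono X (phi t) (slice_y hf t)).
have fix1 (x : X) (t : R) :
    sval (phi t (exist _ [set x] (ex_intro (fun z => [set x] z) x erefl) : lower_hyperspace X)) x.
  pose sx : lower_hyperspace X := exist _ [set x] (ex_intro (fun z => [set x] z) x erefl).
  have single s : exists y, sval (phi s sx) = [set y].
    case: (svalP (phi s sx)) => y hy.
    pose sy : lower_hyperspace X := exist _ [set y] (ex_intro (fun z => [set y] z) y erefl).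
    exists y; apply/seteqP; split; last by move=> z /= ->.
    have h1 : sval sx `<=` sval (phi (- s)%R sy).
      have h2 : sval (phi (- s)%R sy) `<=` sval sx.
        rewrite -[X in _ `<=` sval X](inv_l hf s sx).
        by apply: mon => z /= ->.
      case: (svalP (phi (- s)%R sy)) => w hw z /= ->.
      by have := h2 w hw => /= <-.
    by have := mon s _ _ h1; rewrite inv_r.
  set A := [set s : R | sval (phi s sx) x].
  have Aop : open A.
    have -> : A = (fun s => phi s sx) @^-1` lower_subbase [set x].
      apply/seteqP; split => s /=; first by move=> h; exists x.
      by case=> z [h /= zx]; rewrite zx in h.
    by apply: open_comp; [move=> s _; exact: (slice_t hf sx) | exact: open_sub].
  have Acl : closed A.
    have -> : A = ~` ((fun s => phi s sx) @^-1` lower_subbase (~` [set x])).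
      apply/seteqP; split => s /=.
        move=> h [z [hz nz]]; case: (single s) => y e.
        have hz2 : sval (phi s sx) z := hz; rewrite /A /= e in h; rewrite e in hz2.
        by apply: nz; rewrite /= hz2 h.
      move=> h; apply: contrapT => nh; apply: h.
      case: (svalP (phi s sx)) => z hz; exists z; split => // zx; apply: nh.
      by rewrite /A /= -zx.
    by apply: open_closedC; apply: open_comp; [move=> s _; exact: (slice_t hf sx) | exact: open_sub].
  have AT : A = setT.
    have cT : connected [set: R] by apply/connected_intervalP => ? ? ? ? ? _.
    apply: cT.
    - exists 0%R; rewrite /A /=; case: hf => _ h0 _; by rewrite h0.
    - by exists A => //; rewrite setTI.
    - by exists A => //; rewrite setTI.
  by have : A t by rewrite AT.
have sub t (C : lower_hyperspace X) : sval C `<=` sval (phi t C).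
  move=> z Cz; have := fix1 z t; apply: mon => w /= ->; exact: Cz.
move=> t C.
have e : sval (phi t C) = sval C.
  apply/seteqP; split; last exact: sub.
  by have := sub (- t)%R (phi t C); rewrite inv_l.
move: (phi t C) e; case=> a pa; case: C sub => b pb _ /= E; subst a.
by congr exist; exact: Prop_irrelevance.
Qed.
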